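(* Suppose $G$ satisfies (H1) and (H2), let $\gamma(\cdot,t)$, $t\in[0,\omega)$, be the solution of $\partial_t\gamma=G(k)kN$ with smooth closed strictly convex initial curve on its maximal interval, let $k(\theta,t)$ be its curvature in the tangent-angle parametrization, and set $\Phi=\Phi(k(\theta,t))$ with $\Phi(x)=G(x)x$. Then for every $\varpi\in(0,\omega)$, $$\max_{0\le t\le\varpi,\ \theta\in\mathbb S^1}\Big|\frac{\partial\Phi}{\partial\theta}\Big|^2\le\max\Big\{2\max_{0\le t\le\varpi,\ \theta\in\mathbb S^1}\Phi^2,\ \max_{t=0,\ \theta\in\mathbb S^1}\Big(\Big|\frac{\partial\Phi}{\partial\theta}\Big|^2+2\Phi^2\Big)\Big\}.$$
   Context: (H1): $G\in C^3(0,\infty)$, $G>0$, $G'\ge0$ on $(0,\infty)$. (H2): $x\mapsto G(x)x^2$ is convex on $(0,\infty)$ and there is $C_0>0$ with $G'(x)x\le C_0G(x)$ for all sufficiently large $x$. $k$ is the positive curvature and $N$ the unit inward normal; $\theta\in\mathbb S^1=\mathbb R/2\pi\mathbb Z$ is the tangent angle, which parametrizes each strictly convex curve; the solution exists on a maximal finite interval $[0,\omega)$ and stays strictly convex. *)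

(* Defs.v *)
From Stdlib Require Import Reals Lra.
Open Scope R_scope.

Definition Phi (G : R -> R) (x : R) : R := G x * x.

(** The space-time domain R x [0, w) (theta ranges over R; functions are
    2*PI-periodic in theta, so this is S^1 x [0,w)). *)
Definition in_dom (w t : R) : Prop := 0 <= t < w.

Definition cont2 (w : R) (f : R -> R -> R) : Prop :=
  forall th t, in_dom w t ->
    forall eps, eps > 0 -> exists del, del > 0 /\
      forall th' t', in_dom w t' -> Rabs (th' - th) < del -> Rabs (t' - t) < del ->
        Rabs (f th' t' - f th t) < eps.

(** Smoothness on S^1 x [0,w) (up to t = 0): f is jointly continuous, has a
    theta-partial derivative everywhere on the domain and a t-partial
    derivative for 0 < t < w, and both partial derivatives are again smooth
    (in particular they extend continuously to t = 0). *)
CoInductive Smooth2 (w : R) : (R -> R -> R) -> Prop :=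
| smooth2_intro : forall f : R -> R -> R,
    cont2 w f ->
    (exists fth : R -> R -> R,
        (forall th t, in_dom w t -> derivable_pt_lim (fun s => f s t) th (fth th t))
        /\ Smooth2 w fth) ->
    (exists ft : R -> R -> R,
        (forall th t, 0 < t < w -> derivable_pt_lim (fun s => f th s) t (ft th t))
        /\ Smooth2 w ft) ->
    Smooth2 w f.

Definition H1 (G : R -> R) : Prop :=
  exists G1 G2 G3 : R -> R,
    (forall x, 0 < x -> derivable_pt_lim G x (G1 x)) /\
    (forall x, 0 < x -> derivable_pt_lim G1 x (G2 x)) /\
    (forall x, 0 < x -> derivable_pt_lim G2 x (G3 x)) /\
    (forall x, 0 < x -> continuity_pt G3 x) /\
    (forall x, 0 < x -> 0 < G x) /\
    (forall x, 0 < x -> 0 <= G1 x).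

Definition H2 (G : R -> R) : Prop :=
  (forall a b l, 0 < a -> 0 < b -> 0 <= l <= 1 ->
     G (l * a + (1 - l) * b) * (l * a + (1 - l) * b) ^ 2
       <= l * (G a * a ^ 2) + (1 - l) * (G b * b ^ 2)) /\
  exists C0 M, 0 < C0 /\
    forall x, M < x -> forall d, derivable_pt_lim G x d -> d * x <= C0 * G x.

(** The flow  d/dt gamma = G(k) k N  for a family of smooth closed strictly
    convex curves, written in the tangent-angle parametrization:
    gamma(theta,t) = (X theta t, Y theta t), unit tangent T = (cos, sin),
    inward normal N = (-sin, cos), d gamma/d theta = T / k (so k is the
    curvature at the point with tangent angle theta), and the normal velocity
    <d gamma/dt, N> equals G(k) k (tangential velocity is free, as it only
    reflects the reparametrization by tangent angle). *)
Definition is_flow (G : R -> R) (w : R) (X Y k : R -> R -> R) : Prop :=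
  Smooth2 w X /\ Smooth2 w Y /\ Smooth2 w k /\
  (forall th t, in_dom w t ->
     X (th + 2 * PI) t = X th t /\ Y (th + 2 * PI) t = Y th t /\
     k (th + 2 * PI) t = k th t) /\
  (forall th t, in_dom w t -> 0 < k th t) /\
  (forall th t, in_dom w t ->
     derivable_pt_lim (fun s => X s t) th (cos th / k th t) /\
     derivable_pt_lim (fun s => Y s t) th (sin th / k th t)) /\
  (forall th t, 0 < t < w -> exists xt yt,
     derivable_pt_lim (fun s => X th s) t xt /\
     derivable_pt_lim (fun s => Y th s) t yt /\
     xt * (- sin th) + yt * cos th = Phi G (k th t)).

(* Main.v *)
Require Import Defs.
From Stdlib Require Import Reals Lra Lia Psatz Classical ClassicalEpsilon.
Open Scope R_scope.

Lemma D_loc f g x l r : 0 < r -> derivable_pt_lim f x l ->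
  (forall y, Rabs (y - x) < r -> f y = g y) -> derivable_pt_lim g x l.
Proof.
  intros Hr H E eps He. destruct (H eps He) as [d Hd].
  assert (Hm: 0 < Rmin d r) by (apply Rmin_pos; [apply cond_pos|lra]).
  exists (mkposreal _ Hm). intros h Hh0 Hh. simpl in Hh.
  rewrite <- !E.
  - apply Hd; auto. eapply Rlt_le_trans; [exact Hh| apply Rmin_l].
  - unfold Rminus; rewrite Rplus_opp_r, Rabs_R0; lra.
  - replace (x + h - x) with h by ring. eapply Rlt_le_trans;[exact Hh|apply Rmin_r].
Qed.

Lemma D_ext f g x l : derivable_pt_lim f x l -> (forall y, f y = g y) -> derivable_pt_lim g x l.
Proof. intros H E. apply (D_loc f g x l 1); auto; lra. Qed.

Lemma D_val f x l l' : derivable_pt_lim f x l -> l = l' -> derivable_pt_lim f x l'.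
Proof. intros H ->; exact H. Qed.

Lemma D_const c x : derivable_pt_lim (fun _ => c) x 0.
Proof. exact (derivable_pt_lim_const c x). Qed.
Lemma D_id x : derivable_pt_lim (fun s => s) x 1.
Proof. exact (derivable_pt_lim_id x). Qed.
Lemma D_plus f g x a b : derivable_pt_lim f x a -> derivable_pt_lim g x b ->
  derivable_pt_lim (fun s => f s + g s) x (a + b).
Proof. intros; exact (derivable_pt_lim_plus f g x a b H H0). Qed.
Lemma D_minus f g x a b : derivable_pt_lim f x a -> derivable_pt_lim g x b ->
  derivable_pt_lim (fun s => f s - g s) x (a - b).
Proof. intros; exact (derivable_pt_lim_minus f g x a b H H0). Qed.
Lemma D_mult f g x a b : derivable_pt_lim f x a -> derivable_pt_lim g x b ->
  derivable_pt_lim (fun s => f s * g s) x (a * g x + f x * b).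
Proof. intros; exact (derivable_pt_lim_mult f g x a b H H0). Qed.
Lemma D_opp f x a : derivable_pt_lim f x a -> derivable_pt_lim (fun s => - f s) x (- a).
Proof. intros; exact (derivable_pt_lim_opp f x a H). Qed.
Lemma D_comp f g x a b : derivable_pt_lim f x a -> derivable_pt_lim g (f x) b ->
  derivable_pt_lim (fun s => g (f s)) x (b * a).
Proof. intros; exact (derivable_pt_lim_comp f g x a b H H0). Qed.
Lemma D_div f g x a b : derivable_pt_lim f x a -> derivable_pt_lim g x b -> g x <> 0 ->
  derivable_pt_lim (fun s => f s / g s) x ((a * g x - b * f x) / (g x)²).
Proof. intros; exact (derivable_pt_lim_div f g x a b H H0 H1). Qed.
Lemma D_shift f x c l : derivable_pt_lim f (x + c) l -> derivable_pt_lim (fun s => f (s + c)) x l.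
Proof.
  intros H eps He. destruct (H eps He) as [d Hd]. exists d. intros h H0 H1.
  replace (x + h + c) with (x + c + h) by ring. apply Hd; auto.
Qed.
Lemma D_cont f x l : derivable_pt_lim f x l -> continuity_pt f x.
Proof. intro H. apply (derivable_continuous_pt f x (exist _ l H)). Qed.

Lemma quot_pos a h : 0 < h -> 0 < a / h -> 0 < a.
Proof. intros Hh Hq. assert (a = a / h * h) by (field; lra). nra. Qed.
Lemma quot_negd a h : h < 0 -> a / h < 0 -> 0 < a.
Proof. intros Hh Hq. assert (a = a / h * h) by (field; lra). nra. Qed.
Lemma quot_neg a h : 0 < h -> a / h < 0 -> a < 0.
Proof. intros Hh Hq. assert (a = a / h * h) by (field; lra). nra. Qed.
Lemma quot_posd a h : h < 0 -> 0 < a / h -> a < 0.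
Proof. intros Hh Hq. assert (a = a / h * h) by (field; lra). nra. Qed.

Lemma D_pos_right f x l : derivable_pt_lim f x l -> 0 < l ->
  exists d, 0 < d /\ forall h, 0 < h < d -> f x < f (x + h).
Proof.
  intros H Hl. destruct (H (l/2)) as [d Hd]; [lra|]. exists d; split; [apply cond_pos|].
  intros h Hh. assert (Hq := Hd h ltac:(lra) ltac:(rewrite Rabs_pos_eq; lra)).
  apply Rabs_def2 in Hq. destruct Hq.
  assert (0 < f (x + h) - f x) by (apply (quot_pos _ h); lra). lra.
Qed.
Lemma D_neg_left f x l : derivable_pt_lim f x l -> l < 0 ->
  exists d, 0 < d /\ forall h, 0 < h < d -> f x < f (x - h).
Proof.
  intros H Hl. destruct (H (-l/2)) as [d Hd]; [lra|]. exists d; split; [apply cond_pos|].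
  intros h Hh. assert (Hq := Hd (-h) ltac:(lra) ltac:(rewrite Rabs_Ropp, Rabs_pos_eq; lra)).
  apply Rabs_def2 in Hq. destruct Hq.
  assert (0 < f (x + - h) - f x) by (apply (quot_negd _ (-h)); lra).
  replace (x - h) with (x + - h) by ring. lra.
Qed.
Lemma D_pos_left f x l : derivable_pt_lim f x l -> 0 < l ->
  exists d, 0 < d /\ forall h, 0 < h < d -> f (x - h) < f x.
Proof.
  intros H Hl. destruct (H (l/2)) as [d Hd]; [lra|]. exists d; split; [apply cond_pos|].
  intros h Hh. assert (Hq := Hd (-h) ltac:(lra) ltac:(rewrite Rabs_Ropp, Rabs_pos_eq; lra)).
  apply Rabs_def2 in Hq. destruct Hq.
  assert (f (x + - h) - f x < 0) by (apply (quot_posd _ (-h)); lra).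
  replace (x - h) with (x + - h) by ring. lra.
Qed.

Lemma local_max_D0 f x l r : 0 < r -> (forall y, Rabs (y - x) < r -> f y <= f x) ->
  derivable_pt_lim f x l -> l = 0.
Proof.
  intros Hr Hm H. destruct (Rtotal_order l 0) as [Hl|[Hl|Hl]]; auto.
  - destruct (D_neg_left f x l H Hl) as [d [Hd Hd']].
    set (h := Rmin d r / 2). assert (0 < Rmin d r) by (apply Rmin_pos; lra).
    assert (Rmin d r <= d) by apply Rmin_l. assert (Rmin d r <= r) by apply Rmin_r.
    assert (f x < f (x - h)) by (apply Hd'; unfold h; lra).
    assert (f (x - h) <= f x). { apply Hm. replace (x - h - x) with (-h) by ring.
      rewrite Rabs_Ropp, Rabs_pos_eq; unfold h; lra. }
    lra.
  - destruct (D_pos_right f x l H Hl) as [d [Hd Hd']].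
    set (h := Rmin d r / 2). assert (0 < Rmin d r) by (apply Rmin_pos; lra).
    assert (Rmin d r <= d) by apply Rmin_l. assert (Rmin d r <= r) by apply Rmin_r.
    assert (f x < f (x + h)) by (apply Hd'; unfold h; lra).
    assert (f (x + h) <= f x). { apply Hm. replace (x + h - x) with h by ring.
      rewrite Rabs_pos_eq; unfold h; lra. }
    lra.
Qed.

Lemma second_test f f' x c r : 0 < r -> (forall y, Rabs (y - x) < r -> f y <= f x) ->
  (forall y, derivable_pt_lim f y (f' y)) -> derivable_pt_lim f' x c -> c <= 0.
Proof.
  intros Hr Hm Hf Hc. assert (H0 : f' x = 0) by exact (local_max_D0 f x _ r Hr Hm (Hf x)).
  destruct (Rle_or_lt c 0) as [|Hc0]; auto. exfalso.
  destruct (D_pos_right f' x c Hc Hc0) as [d [Hd Hd']].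
  set (h := Rmin d r / 2). assert (0 < Rmin d r) by (apply Rmin_pos; lra).
  assert (Rmin d r <= d) by apply Rmin_l. assert (Rmin d r <= r) by apply Rmin_r.
  destruct (MVT_cor2 f f' x (x + h)) as [xi [Exi Hxi]]; [unfold h; lra| intros; apply Hf|].
  assert (f' x < f' (x + (xi - x))) by (apply Hd'; unfold h in *; lra).
  replace (x + (xi - x)) with xi in H3 by ring.
  assert (f (x + h) <= f x). { apply Hm. replace (x + h - x) with h by ring.
      rewrite Rabs_pos_eq; unfold h; lra. }
  assert (0 < h) by (unfold h; lra).
  replace (x + h - x) with h in Exi by ring. nra.
Qed.

Lemma left_max g t l r : 0 < r -> (forall h, 0 < h < r -> g (t - h) <= g t) ->
  derivable_pt_lim g t l -> 0 <= l.
Proof.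
  intros Hr Hm H. destruct (Rle_or_lt 0 l) as [|Hl]; auto. exfalso.
  destruct (D_neg_left g t l H Hl) as [d [Hd Hd']].
  set (h := Rmin d r / 2). assert (0 < Rmin d r) by (apply Rmin_pos; lra).
  assert (Rmin d r <= d) by apply Rmin_l. assert (Rmin d r <= r) by apply Rmin_r.
  assert (g t < g (t - h)) by (apply Hd'; unfold h; lra).
  assert (g (t - h) <= g t) by (apply Hm; unfold h; lra). lra.
Qed.

Lemma cont_pt_eps g y0 : continuity_pt g y0 ->
  forall e, 0 < e -> exists a, 0 < a /\ forall y, Rabs (y - y0) < a -> Rabs (g y - g y0) < e.
Proof.
  intros H e He. destruct (H e He) as [a [Ha Hy]]. exists a; split; auto.
  intros y Hy'. destruct (Req_dec y0 y) as [<-|Hne].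
  - unfold Rminus; rewrite Rplus_opp_r, Rabs_R0; lra.
  - apply (Hy y). split; [split; [exact I|exact Hne]| exact Hy'].
Qed.

Lemma eps_cont_pt g y0 : (forall e, 0 < e -> exists a, 0 < a /\ forall y, Rabs (y - y0) < a -> Rabs (g y - g y0) < e) -> continuity_pt g y0.
Proof.
  intros H e He. destruct (H e He) as [a [Ha Hy]]. exists a; split; auto.
  intros y [_ Hy']. apply Hy. exact Hy'.
Qed.

Lemma cont2_theta w F t c : cont2 w F -> in_dom w t -> continuity_pt (fun a => F a t) c.
Proof.
  intros H Ht. apply eps_cont_pt. intros e He. destruct (H c t Ht e He) as [d [Hd Hd']].
  exists d; split; auto. intros y Hy. apply Hd'; auto.
  unfold Rminus; rewrite Rplus_opp_r, Rabs_R0; lra.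
Qed.

Lemma cont2_comp w F g : cont2 w F -> (forall a b, in_dom w b -> continuity_pt g (F a b)) ->
  cont2 w (fun a b => g (F a b)).
Proof.
  intros H Hg th t Ht e He. destruct (cont_pt_eps g _ (Hg th t Ht) e He) as [al [Hal Hal']].
  destruct (H th t Ht al Hal) as [d [Hd Hd']]. exists d; split; [exact Hd|].
  intros. apply Hal'. apply Hd'; auto.
Qed.

Lemma cont2_plus w F1 F2 : cont2 w F1 -> cont2 w F2 -> cont2 w (fun a b => F1 a b + F2 a b).
Proof.
  intros H1 H2 th t Ht e He.
  destruct (H1 th t Ht (e/2)) as [d1 [Hd1 Hd1']]; [lra|].
  destruct (H2 th t Ht (e/2)) as [d2 [Hd2 Hd2']]; [lra|].
  exists (Rmin d1 d2); split; [apply Rmin_pos; auto|].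
  intros th' t' Ht' Ha Hb.
  assert (Rmin d1 d2 <= d1) by apply Rmin_l. assert (Rmin d1 d2 <= d2) by apply Rmin_r.
  specialize (Hd1' th' t' Ht' ltac:(lra) ltac:(lra)). specialize (Hd2' th' t' Ht' ltac:(lra) ltac:(lra)).
  replace (F1 th' t' + F2 th' t' - (F1 th t + F2 th t)) with ((F1 th' t' - F1 th t) + (F2 th' t' - F2 th t)) by ring.
  eapply Rle_lt_trans; [apply Rabs_triang|]. lra.
Qed.

Lemma cont2_mult w F1 F2 : cont2 w F1 -> cont2 w F2 -> cont2 w (fun a b => F1 a b * F2 a b).
Proof.
  intros H1 H2 th t Ht e He.
  set (g0 := Rabs (F2 th t)). set (f0 := Rabs (F1 th t)).
  assert (0 <= g0) by apply Rabs_pos. assert (0 <= f0) by apply Rabs_pos.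
  set (e2 := Rmin 1 (e / (2 * (f0 + 1)))).
  assert (He2 : 0 < e2) by (apply Rmin_pos; [lra| apply Rdiv_lt_0_compat; lra]).
  assert (e2 <= 1) by apply Rmin_l. assert (e2 <= e / (2 * (f0 + 1))) by apply Rmin_r.
  assert (He1 : 0 < e / (2 * (g0 + 1))) by (apply Rdiv_lt_0_compat; lra).
  destruct (H1 th t Ht _ He1) as [d1 [Hd1 Hd1']].
  destruct (H2 th t Ht e2 He2) as [d2 [Hd2 Hd2']].
  exists (Rmin d1 d2); split; [apply Rmin_pos; auto|].
  intros th' t' Ht' Ha Hb.
  assert (Rmin d1 d2 <= d1) by apply Rmin_l. assert (Rmin d1 d2 <= d2) by apply Rmin_r.
  specialize (Hd1' th' t' Ht' ltac:(lra) ltac:(lra)). specialize (Hd2' th' t' Ht' ltac:(lra) ltac:(lra)).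
  set (a := F1 th' t' - F1 th t) in *. set (b := F2 th' t' - F2 th t) in *.
  replace (F1 th' t' * F2 th' t' - F1 th t * F2 th t) with (a * F2 th' t' + F1 th t * b)
    by (unfold a, b; ring).
  eapply Rle_lt_trans; [apply Rabs_triang|]. rewrite !Rabs_mult.
  assert (Hg : Rabs (F2 th' t') <= g0 + 1).
  { unfold g0. replace (F2 th' t') with (F2 th t + b) by (unfold b; ring).
    eapply Rle_trans; [apply Rabs_triang|]. lra. }
  assert (Rabs a * Rabs (F2 th' t') <= Rabs a * (g0 + 1)) by (apply Rmult_le_compat_l; [apply Rabs_pos|lra]).
  assert (Rabs a * (g0 + 1) < e / 2).
  { apply Rlt_le_trans with (e / (2 * (g0 + 1)) * (g0 + 1)); [apply Rmult_lt_compat_r; lra|].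
    right; field; lra. }
  assert (f0 * Rabs b <= f0 * e2) by (apply Rmult_le_compat_l; lra).
  assert (f0 * e2 <= f0 * (e / (2 * (f0 + 1)))) by (apply Rmult_le_compat_l; lra).
  assert (f0 * (e / (2 * (f0 + 1))) < e / 2).
  { apply Rmult_lt_reg_r with (2 * (f0 + 1)); [lra|].
    replace (f0 * (e / (2 * (f0 + 1))) * (2 * (f0 + 1))) with (f0 * e) by (field; lra). nra. }
  fold f0. lra.
Qed.

Lemma schwarz w f f1 ft f1t ftth th t :
  0 < t < w ->
  (forall a s, in_dom w s -> derivable_pt_lim (fun x => f x s) a (f1 a s)) ->
  (forall a s, 0 < s < w -> derivable_pt_lim (fun x => f a x) s (ft a s)) ->
  (forall a s, 0 < s < w -> derivable_pt_lim (fun x => f1 a x) s (f1t a s)) ->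
  (forall a s, in_dom w s -> derivable_pt_lim (fun x => ft x s) a (ftth a s)) ->
  cont2 w f1t -> cont2 w ftth ->
  f1t th t = ftth th t.
Proof.
  intros Ht Hf1 Hft Hf1t Hftth C1 C2.
  assert (Hdom : in_dom w t) by (unfold in_dom; lra).
  destruct (Req_dec (f1t th t) (ftth th t)) as [|Hne]; auto. exfalso.
  set (e := Rabs (f1t th t - ftth th t) / 3).
  assert (He : 0 < e) by (unfold e; apply Rdiv_lt_0_compat; [apply Rabs_pos_lt; lra|lra]).
  destruct (C1 th t Hdom e He) as [d1 [Hd1 Hd1']].
  destruct (C2 th t Hdom e He) as [d2 [Hd2 Hd2']].
  set (h := Rmin (Rmin d1 d2) (w - t) / 2).
  assert (0 < Rmin (Rmin d1 d2) (w - t)) by (repeat apply Rmin_pos; lra).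
  assert (Rmin (Rmin d1 d2) (w - t) <= Rmin d1 d2) by apply Rmin_l.
  assert (Rmin (Rmin d1 d2) (w - t) <= w - t) by apply Rmin_r.
  assert (Rmin d1 d2 <= d1) by apply Rmin_l. assert (Rmin d1 d2 <= d2) by apply Rmin_r.
  assert (Hh : 0 < h) by (unfold h; lra).
  assert (h < d1) by (unfold h; lra). assert (h < d2) by (unfold h; lra).
  assert (t + h < w) by (unfold h; lra).
  destruct (MVT_cor2 (fun x => f x (t + h) - f x t) (fun x => f1 x (t + h) - f1 x t) th (th + h))
    as [xi [E1 Hxi]]; [lra| intros; apply D_minus; apply Hf1; unfold in_dom; lra|].
  destruct (MVT_cor2 (fun s => f1 xi s) (fun s => f1t xi s) t (t + h))
    as [eta [E2 Heta]]; [lra| intros; apply Hf1t; lra|].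
  destruct (MVT_cor2 (fun s => f (th + h) s - f th s) (fun s => ft (th + h) s - ft th s) t (t + h))
    as [eta' [E3 Heta']]; [lra| intros; apply D_minus; apply Hft; lra|].
  destruct (MVT_cor2 (fun x => ft x eta') (fun x => ftth x eta') th (th + h))
    as [xi' [E4 Hxi']]; [lra| intros; apply Hftth; unfold in_dom; lra|].
  simpl in *.
  replace (th + h - th) with h in * by ring. replace (t + h - t) with h in * by ring.
  assert (Eq : f1t xi eta = ftth xi' eta').
  { assert (f1t xi eta * h * h = ftth xi' eta' * h * h).
    { rewrite <- E2, <- E4, <- E1, <- E3. ring. }
    apply Rmult_eq_reg_r with (h * h); [|nra]. rewrite <- !Rmult_assoc; auto. }
  assert (A1 := Hd1' xi eta ltac:(unfold in_dom; lra) ltac:(rewrite Rabs_pos_eq; lra) ltac:(rewrite Rabs_pos_eq; lra)).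
  assert (A2 := Hd2' xi' eta' ltac:(unfold in_dom; lra) ltac:(rewrite Rabs_pos_eq; lra) ltac:(rewrite Rabs_pos_eq; lra)).
  rewrite Eq in A1.
  assert (Rabs (f1t th t - ftth th t) <= Rabs (ftth xi' eta' - f1t th t) + Rabs (ftth xi' eta' - ftth th t)).
  { replace (f1t th t - ftth th t) with (- (ftth xi' eta' - f1t th t) + (ftth xi' eta' - ftth th t)) by ring.
    eapply Rle_trans; [apply Rabs_triang|]. rewrite Rabs_Ropp. lra. }
  unfold e in *. lra.
Qed.

Lemma unif_bound w F a b t0 M eta : a <= b -> cont2 w F -> in_dom w t0 ->
  (forall th, a <= th <= b -> F th t0 <= M) -> 0 < eta ->
  exists d, 0 < d /\ forall th t, a <= th <= b -> in_dom w t -> Rabs (t - t0) < d -> F th t < M + eta.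
Proof.
  intros Hab C Ht0 HM Heta.
  set (E := fun x => a <= x <= b /\ exists d, 0 < d /\ forall th t, a <= th <= x -> in_dom w t ->
       Rabs (t - t0) < d -> F th t < M + eta).
  assert (Ea : E a).
  { split; [lra|]. destruct (C a t0 Ht0 eta Heta) as [d [Hd Hd']]. exists d; split; auto.
    intros th t Hth Ht Htt. assert (th = a) by lra. subst th.
    assert (H := Hd' a t Ht ltac:(unfold Rminus; rewrite Rplus_opp_r, Rabs_R0; lra) Htt).
    apply Rabs_def2 in H. specialize (HM a ltac:(lra)). lra. }
  assert (Hb : bound E) by (exists b; intros x [Hx _]; lra).
  destruct (completeness E Hb (ex_intro _ a Ea)) as [s [Hs1 Hs2]].
  assert (a <= s) by (apply Hs1; exact Ea).
  assert (s <= b) by (apply Hs2; intros x [Hx _]; lra).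
  destruct (C s t0 Ht0 eta Heta) as [ds [Hds Hds']].
  assert (Hx : exists x, E x /\ s - ds < x).
  { apply NNPP; intro N. assert (s <= s - ds); [|lra].
    apply Hs2. intros x Ex. destruct (Rle_or_lt x (s - ds)); auto. exfalso; apply N; eauto. }
  destruct Hx as [x [[Hxab [dx [Hdx Hdx']]] Hxs]].
  set (x' := Rmin b (s + ds / 2)).
  assert (x' <= b) by apply Rmin_l. assert (x' <= s + ds / 2) by apply Rmin_r.
  assert (Hx' : E x').
  { split. { unfold x'; unfold Rmin; destruct Rle_dec; lra. }
    exists (Rmin dx ds); split; [apply Rmin_pos; auto|].
    assert (Rmin dx ds <= dx) by apply Rmin_l. assert (Rmin dx ds <= ds) by apply Rmin_r.
    intros th t Hth Ht Htt. destruct (Rle_or_lt th x).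
    - apply Hdx'; auto; lra.
    - assert (HH := Hds' th t Ht ltac:(apply Rabs_def1; lra) ltac:(lra)).
      apply Rabs_def2 in HH. specialize (HM s ltac:(lra)). lra. }
  assert (x' <= s) by (apply Hs1; exact Hx').
  assert (Eb : E b).
  { unfold x' in *. unfold Rmin in *. destruct Rle_dec; [exact Hx'|lra]. }
  destruct Eb as [_ [d [Hd Hd']]]. exists d; split; [exact Hd|]. intros; apply Hd'; auto; lra.
Qed.

Lemma clamp_lip v t x : 0 <= v -> Rabs (Rmin v (Rmax 0 t) - Rmin v (Rmax 0 x)) <= Rabs (t - x).
Proof.
  intros Hv. unfold Rmin, Rmax, Rabs. repeat destruct Rle_dec; repeat destruct Rcase_abs; lra.
Qed.

Lemma space_time_max w F a b v : a <= b -> 0 < v < w -> cont2 w F ->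
  exists thm : R -> R,
    (forall t, in_dom w t -> a <= thm t <= b /\ forall th, a <= th <= b -> F th t <= F (thm t) t) /\
    forall eps, 0 < eps -> exists ts, 0 <= ts <= v /\
      forall t, 0 <= t <= v -> F (thm t) t - eps * t <= F (thm ts) ts - eps * ts.
Proof.
  intros Hab Hv C.
  assert (Ex : forall t, exists th, in_dom w t -> a <= th <= b /\ forall c, a <= c <= b -> F c t <= F th t).
  { intro t. destruct (classic (in_dom w t)) as [Ht|Ht].
    - destruct (continuity_ab_maj (fun c => F c t) a b Hab) as [th [H1 H2]].
      + intros; apply (cont2_theta w F t c C Ht).
      + exists th; intros _; split; auto.
    - exists a; intros H; contradiction. }
  exists (fun t => proj1_sig (constructive_indefinite_description _ (Ex t))).
  set (thm := fun t => proj1_sig (constructive_indefinite_description _ (Ex t))).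
  assert (Hthm : forall t, in_dom w t -> a <= thm t <= b /\ forall c, a <= c <= b -> F c t <= F (thm t) t).
  { intros t Ht. unfold thm. destruct (constructive_indefinite_description _ (Ex t)) as [th Hth]; simpl; auto. }
  split; [exact Hthm|]. fold thm.
  set (m := fun t => F (thm t) t).
  assert (Mc : forall t0, in_dom w t0 -> forall e, 0 < e -> exists d, 0 < d /\
     forall t, in_dom w t -> Rabs (t - t0) < d -> Rabs (m t - m t0) < e).
  { intros t0 Ht0 e He. destruct (Hthm t0 Ht0) as [Hr Hmx].
    destruct (C (thm t0) t0 Ht0 e He) as [d1 [Hd1 Hd1']].
    destruct (unif_bound w F a b t0 (m t0) e Hab C Ht0 Hmx He) as [d2 [Hd2 Hd2']].
    exists (Rmin d1 d2); split; [apply Rmin_pos; auto|].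
    assert (Rmin d1 d2 <= d1) by apply Rmin_l. assert (Rmin d1 d2 <= d2) by apply Rmin_r.
    intros t Ht Htt. destruct (Hthm t Ht) as [Hr' Hmx'].
    assert (H1 := Hd1' (thm t0) t Ht ltac:(unfold Rminus; rewrite Rplus_opp_r, Rabs_R0; lra) ltac:(lra)).
    apply Rabs_def2 in H1.
    assert (H2 := Hmx' (thm t0) Hr).
    assert (H3 := Hd2' (thm t) t Hr' Ht ltac:(lra)).
    unfold m in *. apply Rabs_def1; lra. }
  intros eps Heps.
  set (cl := fun t => Rmin v (Rmax 0 t)).
  assert (Hcl : forall t, 0 <= cl t <= v) by (intro t; unfold cl, Rmin, Rmax; repeat destruct Rle_dec; lra).
  assert (Hcl2 : forall t, 0 <= t <= v -> cl t = t) by (intros t Ht; unfold cl, Rmin, Rmax; repeat destruct Rle_dec; lra).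
  destruct (continuity_ab_maj (fun t => m (cl t) - eps * cl t) 0 v) as [ts [H1 H2]]; [lra| |].
  - intros c Hc. apply eps_cont_pt. intros e He.
    assert (Hcd : in_dom w c) by (unfold in_dom; lra).
    destruct (Mc c Hcd (e/2)) as [d [Hd Hd']]; [lra|].
    assert (Hq : 0 < e / (2 * eps)) by (apply Rdiv_lt_0_compat; lra).
    exists (Rmin d (e / (2 * eps))); split; [apply Rmin_pos; auto|].
    assert (Rmin d (e / (2 * eps)) <= d) by apply Rmin_l.
    assert (Rmin d (e / (2 * eps)) <= e / (2 * eps)) by apply Rmin_r.
    intros y Hy. assert (HL := clamp_lip v y c ltac:(lra)). fold (cl y) in HL. fold (cl c) in HL.
    rewrite (Hcl2 c Hc) in *.
    assert (Hyd : in_dom w (cl y)) by (specialize (Hcl y); unfold in_dom; lra).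
    assert (A := Hd' (cl y) Hyd ltac:(lra)).
    replace (m (cl y) - eps * cl y - (m c - eps * c)) with ((m (cl y) - m c) + - (eps * (cl y - c))) by ring.
    eapply Rle_lt_trans; [apply Rabs_triang|]. rewrite Rabs_Ropp, Rabs_mult, (Rabs_pos_eq eps) by lra.
    assert (eps * Rabs (cl y - c) < eps * (e / (2 * eps))) by (apply Rmult_lt_compat_l; lra).
    replace (eps * (e / (2 * eps))) with (e / 2) in * by (field; lra). lra.
  - exists ts; split; auto. intros t Ht. specialize (H1 t Ht). simpl in H1.
    rewrite !Hcl2 in H1 by auto. exact H1.
Qed.

Lemma per_reduce (f : R -> R) : (forall x, f (x + 2 * PI) = f x) ->
  forall x, exists y, 0 <= y <= 2 * PI /\ f x = f y.
Proof.
  intros Hp. assert (Hpi := PI_RGT_0).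
  assert (Ind : forall n x, Rabs x <= INR n * (2 * PI) -> exists y, 0 <= y <= 2 * PI /\ f x = f y).
  { induction n as [|n IH]; intros x Hx.
    - simpl in Hx. assert (x = 0) by (unfold Rabs in Hx; destruct Rcase_abs; lra).
      exists x; split; [lra|auto].
    - rewrite S_INR in Hx.
      destruct (Rle_or_lt 0 x) as [Hx0|Hx0].
      + destruct (Rle_or_lt x (2 * PI)). { exists x; split; [lra|auto]. }
        destruct (IH (x - 2 * PI)) as [y [Hy Ey]].
        { rewrite Rabs_pos_eq in * by lra. lra. }
        exists y; split; auto. rewrite <- Ey. rewrite <- (Hp (x - 2 * PI)). f_equal; ring.
      + destruct (Rle_or_lt 0 (x + 2 * PI)).
        { exists (x + 2 * PI); split; [lra|]. rewrite Hp; auto. }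
        destruct (IH (x + 2 * PI)) as [y [Hy Ey]].
        { rewrite Rabs_left in * by lra. lra. }
        exists y; split; auto. rewrite <- Ey, Hp. auto. }
  intro x. destruct (INR_archimed (2 * PI) (Rabs x)) as [n Hn]; [lra|].
  apply (Ind n). lra.
Qed.

Theorem lemma3p4 (G : R -> R) (w : R) (X Y k : R -> R -> R) :
  H1 G -> H2 G -> 0 < w -> is_flow G w X Y k ->
  forall varpi, 0 < varpi < w ->
  forall A B : R,
    (forall th t, 0 <= t <= varpi -> (Phi G (k th t)) ^ 2 <= A) ->
    (forall th d, derivable_pt_lim (fun s => Phi G (k s 0)) th d ->
        d ^ 2 + 2 * (Phi G (k th 0)) ^ 2 <= B) ->
    forall th t d, 0 <= t <= varpi ->
      derivable_pt_lim (fun s => Phi G (k s t)) th d ->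
      d ^ 2 <= Rmax (2 * A) B.
Proof.
  intros HG1 _ Hw [SX [SY [Sk [Hper [Hkpos [HXYth HXYt]]]]]] varpi Hvp A B HA HB.
  destruct HG1 as [G1 [G2 [G3 [DG [DG1 [_ [_ [Gpos G1nn]]]]]]]].
  destruct Sk as [k Ck [k1 [Dk1 Sk1]] [kt [Dkt Skt]]].
  destruct Sk1 as [k1 Ck1 [k2 [Dk2 _]] [k1t [Dk1t Sk1t]]].
  destruct Sk1t as [k1t Ck1t _ _].
  destruct Skt as [kt Ckt [ktth [Dktth Sktth]] _].
  destruct Sktth as [ktth Cktth _ _].
  destruct SX as [X CX [X1 [DX1 SX1]] [P [DP SP]]].
  destruct SX1 as [X1 _ _ [X1t [DX1t SX1t]]].
  destruct SX1t as [X1t CX1t _ _].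
  destruct SP as [P _ [Pth [DPth SPth]] _].
  destruct SPth as [Pth CPth _ _].
  destruct SY as [Y CY [Y1 [DY1 SY1]] [Q [DQ SQ]]].
  destruct SY1 as [Y1 _ _ [Y1t [DY1t SY1t]]].
  destruct SY1t as [Y1t CY1t _ _].
  destruct SQ as [Q _ [Qth [DQth SQth]] _].
  destruct SQth as [Qth CQth _ _].

  assert (Hpi := PI_RGT_0).
  assert (Ikdom : forall s, 0 < s < w -> in_dom w s) by (intros s Hs; unfold in_dom; lra).
  set (Phd := fun x => G1 x * x + G x).
  set (Phdd := fun x => G2 x * x + G1 x + G1 x).
  assert (DPhi : forall y, 0 < y -> derivable_pt_lim (Phi G) y (Phd y)).
  { intros y Hy. unfold Phi. apply D_val with (G1 y * y + G y * 1).
    - apply (D_mult G (fun s => s)); [apply DG; auto| apply D_id].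
    - unfold Phd; ring. }
  assert (DPhd : forall y, 0 < y -> derivable_pt_lim Phd y (Phdd y)).
  { intros y Hy. unfold Phd. apply D_val with (G2 y * y + G1 y * 1 + G1 y).
    - apply (D_plus (fun s => G1 s * s) G); [apply (D_mult G1 (fun s => s)); [apply DG1; auto| apply D_id]| apply DG; auto].
    - unfold Phdd; ring. }
  assert (Phdpos : forall y, 0 < y -> 0 < Phd y).
  { intros y Hy. unfold Phd. specialize (G1nn y Hy). specialize (Gpos y Hy). nra. }
  set (U := fun a s => Phi G (k a s)).
  set (U1 := fun a s => Phd (k a s) * k1 a s).
  set (U2 := fun a s => kt a s / (k a s * k a s) - U a s).
  set (U3 := fun a s => (ktth a s * (k a s * k a s) - (k1 a s * k a s + k a s * k1 a s) * kt a s) / (k a s * k a s)² - U1 a s).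
  set (W := fun a s => U1 a s * U1 a s + U a s * U a s).
  set (Wd := fun a s => U2 a s * U1 a s + U1 a s * U2 a s + (U1 a s * U a s + U a s * U1 a s)).
  assert (F1 : forall a s, in_dom w s -> derivable_pt_lim (fun x => U x s) a (U1 a s)).
  { intros a s Hs. apply (D_comp (fun x => k x s) (Phi G)); [apply Dk1; auto| apply DPhi; apply Hkpos; auto]. }
  assert (F3 : forall a s, 0 < s < w -> derivable_pt_lim (fun x => U a x) s (Phd (k a s) * kt a s)).
  { intros a s Hs. apply (D_comp (fun x => k a x) (Phi G)); [apply Dkt; auto| apply DPhi; apply Hkpos; auto]. }
  assert (F4 : forall a s, 0 < s < w -> derivable_pt_lim (fun x => U1 a x) s
      (Phdd (k a s) * kt a s * k1 a s + Phd (k a s) * k1t a s)).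
  { intros a s Hs. apply (D_mult (fun x => Phd (k a x)) (fun x => k1 a x)).
    - apply (D_comp (fun x => k a x) Phd); [apply Dkt; auto| apply DPhd; apply Hkpos; auto].
    - apply Dk1t; auto. }
  assert (F5 : forall a s, 0 < s < w -> derivable_pt_lim (fun x => W a x) s
      ((Phdd (k a s) * kt a s * k1 a s + Phd (k a s) * k1t a s) * U1 a s + U1 a s * (Phdd (k a s) * kt a s * k1 a s + Phd (k a s) * k1t a s)
       + (Phd (k a s) * kt a s * U a s + U a s * (Phd (k a s) * kt a s)))).
  { intros a s Hs. apply (D_plus (fun x => U1 a x * U1 a x) (fun x => U a x * U a x));
      apply D_mult; auto. }
  assert (CU : cont2 w U).
  { apply (cont2_comp w k (Phi G)); auto. intros a b Hb. apply (D_cont _ _ _ (DPhi _ (Hkpos a b Hb))). }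
  assert (CU1 : cont2 w U1).
  { apply (cont2_mult w (fun a s => Phd (k a s)) k1); auto.
    apply (cont2_comp w k Phd); auto. intros a b Hb. apply (D_cont _ _ _ (DPhd _ (Hkpos a b Hb))). }
  assert (CW : cont2 w W) by (apply cont2_plus; apply cont2_mult; auto).

  assert (EX1 : forall a s, in_dom w s -> X1 a s = cos a / k a s).
  { intros a s Hs. apply (uniqueness_limite (fun x => X x s) a); [apply DX1; auto| apply HXYth; auto]. }
  assert (EY1 : forall a s, in_dom w s -> Y1 a s = sin a / k a s).
  { intros a s Hs. apply (uniqueness_limite (fun x => Y x s) a); [apply DY1; auto| apply HXYth; auto]. }
  assert (EPth : forall a s, 0 < s < w -> Pth a s = (0 * k a s - kt a s * cos a) / (k a s)²).
  { intros a s Hs.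
    rewrite <- (schwarz w X X1 P X1t Pth a s Hs DX1 DP DX1t DPth CX1t CPth).
    apply (uniqueness_limite (fun x => X1 a x) s); [apply DX1t; auto|].
    apply (D_loc (fun x => cos a / k a x) _ _ _ (Rmin s (w - s))); [apply Rmin_pos; lra| |].
    - apply (D_div (fun _ => cos a) (fun x => k a x)); [apply D_const| apply Dkt; auto| ].
      specialize (Hkpos a s (Ikdom s Hs)); lra.
    - intros y Hy. assert (Rmin s (w - s) <= s) by apply Rmin_l. assert (Rmin s (w - s) <= w - s) by apply Rmin_r.
      apply Rabs_def2 in Hy. rewrite EX1; auto. unfold in_dom; lra. }
  assert (EQth : forall a s, 0 < s < w -> Qth a s = (0 * k a s - kt a s * sin a) / (k a s)²).
  { intros a s Hs.
    rewrite <- (schwarz w Y Y1 Q Y1t Qth a s Hs DY1 DQ DY1t DQth CY1t CQth).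
    apply (uniqueness_limite (fun x => Y1 a x) s); [apply DY1t; auto|].
    apply (D_loc (fun x => sin a / k a x) _ _ _ (Rmin s (w - s))); [apply Rmin_pos; lra| |].
    - apply (D_div (fun _ => sin a) (fun x => k a x)); [apply D_const| apply Dkt; auto| ].
      specialize (Hkpos a s (Ikdom s Hs)); lra.
    - intros y Hy. assert (Rmin s (w - s) <= s) by apply Rmin_l. assert (Rmin s (w - s) <= w - s) by apply Rmin_r.
      apply Rabs_def2 in Hy. rewrite EY1; auto. unfold in_dom; lra. }
  assert (Norm : forall a s, 0 < s < w -> P a s * - sin a + Q a s * cos a = U a s).
  { intros a s Hs. destruct (HXYt a s Hs) as [xt [yt [Hx [Hy He]]]].
    rewrite (uniqueness_limite (fun x => X a x) s (P a s) xt); [|apply DP; auto|auto].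
    rewrite (uniqueness_limite (fun x => Y a x) s (Q a s) yt); [|apply DQ; auto|auto]. exact He. }
  assert (F6 : forall a s, 0 < s < w -> U1 a s = - (P a s * cos a + Q a s * sin a)).
  { intros a s Hs.
    apply (uniqueness_limite (fun x => U x s) a); [apply F1; auto|].
    apply (D_ext (fun x => P x s * - sin x + Q x s * cos x)); [|intro y; apply Norm; auto].
    eapply D_val.
    - apply (D_plus (fun x => P x s * - sin x) (fun x => Q x s * cos x)).
      + apply (D_mult (fun x => P x s) (fun x => - sin x)); [apply DPth; auto| apply D_opp; apply derivable_pt_lim_sin].
      + apply (D_mult (fun x => Q x s) (fun x => cos x)); [apply DQth; auto| apply derivable_pt_lim_cos].
    - rewrite EPth, EQth by auto. assert (Hk := Hkpos a s (Ikdom s Hs)). unfold Rsqr. field. lra. }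
  assert (Hsc : forall a, sin a * sin a + cos a * cos a = 1).
  { intro a. assert (H := sin2_cos2 a). unfold Rsqr in H. lra. }
  assert (F7 : forall a s, 0 < s < w -> derivable_pt_lim (fun x => U1 x s) a (U2 a s)).
  { intros a s Hs.
    apply (D_ext (fun x => - (P x s * cos x + Q x s * sin x))); [|intro y; symmetry; apply F6; auto].
    eapply D_val.
    - apply D_opp. apply (D_plus (fun x => P x s * cos x) (fun x => Q x s * sin x)).
      + apply (D_mult (fun x => P x s) (fun x => cos x)); [apply DPth; auto| apply derivable_pt_lim_cos].
      + apply (D_mult (fun x => Q x s) (fun x => sin x)); [apply DQth; auto| apply derivable_pt_lim_sin].
    - rewrite EPth, EQth by auto. assert (Hk := Hkpos a s (Ikdom s Hs)).
      unfold U2. rewrite <- (Norm a s Hs).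
      set (q := kt a s / (k a s * k a s)).
      assert (E1 : (0 * k a s - kt a s * cos a) / (k a s)² = - q * cos a) by (unfold q, Rsqr; field; lra).
      assert (E2 : (0 * k a s - kt a s * sin a) / (k a s)² = - q * sin a) by (unfold q, Rsqr; field; lra).
      rewrite E1, E2. assert (E3 : q * (sin a * sin a + cos a * cos a) = q) by (rewrite Hsc; ring).
      lra. }
  assert (F8 : forall a s, in_dom w s -> derivable_pt_lim (fun x => U2 x s) a (U3 a s)).
  { intros a s Hs. assert (Hk := Hkpos a s Hs).
    apply (D_minus (fun x => kt x s / (k x s * k x s)) (fun x => U x s)); [|apply F1; auto].
    apply (D_div (fun x => kt x s) (fun x => k x s * k x s)).
    - apply Dktth; auto.
    - apply (D_mult (fun x => k x s) (fun x => k x s)); apply Dk1; auto.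
    - nra. }
  assert (F9 : forall a s, 0 < s < w -> derivable_pt_lim (fun x => W x s) a (Wd a s)).
  { intros a s Hs. unfold Wd. apply (D_plus (fun x => U1 x s * U1 x s) (fun x => U x s * U x s)).
    - apply (D_mult (fun x => U1 x s) (fun x => U1 x s)); apply F7; auto.
    - apply (D_mult (fun x => U x s) (fun x => U x s)); apply F1; auto. }
  assert (F10 : forall a s, 0 < s < w -> derivable_pt_lim (fun x => Wd x s) a
      ((U3 a s * U1 a s + U2 a s * U2 a s) + (U2 a s * U2 a s + U1 a s * U3 a s)
       + ((U2 a s * U a s + U1 a s * U1 a s) + (U1 a s * U1 a s + U a s * U2 a s)))).
  { intros a s Hs. unfold Wd.
    apply (D_plus (fun x => U2 x s * U1 x s + U1 x s * U2 x s) (fun x => U1 x s * U x s + U x s * U1 x s)).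
    - apply (D_plus (fun x => U2 x s * U1 x s) (fun x => U1 x s * U2 x s)).
      + apply (D_mult (fun x => U2 x s) (fun x => U1 x s)); [apply F8; auto| apply F7; auto].
      + apply (D_mult (fun x => U1 x s) (fun x => U2 x s)); [apply F7; auto| apply F8; auto].
    - apply (D_plus (fun x => U1 x s * U x s) (fun x => U x s * U1 x s)).
      + apply (D_mult (fun x => U1 x s) (fun x => U x s)); [apply F7; auto| apply F1; auto].
      + apply (D_mult (fun x => U x s) (fun x => U1 x s)); [apply F1; auto| apply F7; auto]. }
  assert (Pk1 : forall a s, in_dom w s -> k1 (a + 2 * PI) s = k1 a s).
  { intros a s Hs. apply (uniqueness_limite (fun x => k x s) a); [|apply Dk1; auto].
    apply (D_ext (fun x => k (x + 2 * PI) s)); [apply (D_shift (fun x => k x s)); apply Dk1; auto|].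
    intro y. apply Hper; auto. }
  assert (PW : forall a s, in_dom w s -> W (a + 2 * PI) s = W a s).
  { intros a s Hs. unfold W, U1, U. rewrite Pk1 by auto. destruct (Hper a s Hs) as [_ [_ ->]]. auto. }

  assert (HA0 : 0 <= A) by (specialize (HA 0 0 ltac:(lra)); nra).
  destruct (space_time_max w W 0 (2 * PI) varpi ltac:(lra) Hvp CW) as [thm [Hthm Hts]].
  set (M0 := Rmax A B).
  assert (HAM : A <= M0) by apply Rmax_l. assert (HBM : B <= M0) by apply Rmax_r.
  assert (Red : forall a t, in_dom w t -> W a t <= W (thm t) t).
  { intros a t Ht. destruct (per_reduce (fun x => W x t)) with (x := a) as [y [Hy Ey]].
    - intro x. apply PW; auto.
    - simpl in Ey. rewrite Ey. apply (Hthm t Ht); auto. }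
  assert (Key : forall eps, 0 < eps -> forall t, 0 <= t <= varpi -> W (thm t) t - eps * t <= M0).
  { intros eps Heps. destruct (Hts eps Heps) as [ts [Hts1 Hts2]].
    enough (W (thm ts) ts - eps * ts <= M0) by (intros t Ht; specialize (Hts2 t Ht); lra).
    destruct (Req_dec ts 0) as [E0|Hts0].
    - subst ts. assert (H0 : in_dom w 0) by (unfold in_dom; lra).
      assert (HB' := HB (thm 0) (U1 (thm 0) 0) (F1 (thm 0) 0 H0)).
      unfold W. fold (U (thm 0) 0) in HB'. simpl in HB'. nra.
    - set (th' := thm ts).
      assert (Hin : 0 < ts < w) by lra.
      destruct (Rle_or_lt (W th' ts) A) as [HWA|HWA].
      { assert (0 <= eps * ts) by (apply Rmult_le_pos; lra). lra. }
      exfalso.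
      assert (HU := HA th' ts ltac:(lra)). fold (U th' ts) in HU. simpl in HU.
      assert (HU1 : U1 th' ts * U1 th' ts > 0) by (unfold W in HWA; nra).
      assert (Hk := Hkpos th' ts (Ikdom ts Hin)).
      assert (Hth' := proj1 (Hthm ts (Ikdom ts Hin))). fold th' in Hth'.
      assert (LM : forall y, Rabs (y - th') < 2 * PI -> W y ts <= W th' ts).
      { intros y Hy. apply Rabs_def2 in Hy. unfold th'. apply Red. apply Ikdom; auto. }
      assert (Wd0 : Wd th' ts = 0) by exact (local_max_D0 _ _ _ (2 * PI) ltac:(lra) LM (F9 th' ts Hin)).
      assert (HUU : U2 th' ts + U th' ts = 0).
      { unfold Wd in Wd0. assert (U1 th' ts * (U2 th' ts + U th' ts) = 0) by nra.
        apply Rmult_integral in H. destruct H; [nra|auto]. }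
      assert (Hkt0 : kt th' ts = 0).
      { unfold U2 in HUU. assert (kt th' ts / (k th' ts * k th' ts) = 0) by lra.
        assert (kt th' ts = kt th' ts / (k th' ts * k th' ts) * (k th' ts * k th' ts)) by (field; lra).
        rewrite H0, H. ring. }
      assert (ST := second_test (fun x => W x ts) (fun x => Wd x ts) th' _ (2 * PI) ltac:(lra) LM
                      (fun y => F9 y ts Hin) (F10 th' ts Hin)).
      simpl in ST.
      assert (HU3 : U3 th' ts + U1 th' ts = ktth th' ts / (k th' ts * k th' ts)).
      { unfold U3. rewrite Hkt0. unfold Rsqr. field. lra. }
      assert (Sg : U1 th' ts * ktth th' ts <= 0).
      { assert (U1 th' ts * (U3 th' ts + U1 th' ts) <= 0) by nra.
        rewrite HU3 in H.
        assert (U1 th' ts * ktth th' ts = U1 th' ts * (ktth th' ts / (k th' ts * k th' ts)) * (k th' ts * k th' ts)) by (field; lra).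
        rewrite H0. assert (0 < k th' ts * k th' ts) by nra. nra. }
      assert (Sch : k1t th' ts = ktth th' ts) by exact (schwarz w k k1 kt k1t ktth th' ts Hin Dk1 Dkt Dk1t Dktth Ck1t Cktth).
      assert (Hpd := Phdpos _ Hk).
      assert (Dg : derivable_pt_lim (fun s => W th' s - eps * s) ts
         (((Phdd (k th' ts) * kt th' ts * k1 th' ts + Phd (k th' ts) * k1t th' ts) * U1 th' ts + U1 th' ts * (Phdd (k th' ts) * kt th' ts * k1 th' ts + Phd (k th' ts) * k1t th' ts)
       + (Phd (k th' ts) * kt th' ts * U th' ts + U th' ts * (Phd (k th' ts) * kt th' ts))) - eps * 1)).
      { apply (D_minus (fun s => W th' s) (fun s => eps * s)); [apply F5; auto|].
        eapply D_val; [apply (D_mult (fun _ => eps) (fun s => s)); [apply D_const| apply D_id]| ring]. }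
      assert (0 <= ((Phdd (k th' ts) * kt th' ts * k1 th' ts + Phd (k th' ts) * k1t th' ts) * U1 th' ts + U1 th' ts * (Phdd (k th' ts) * kt th' ts * k1 th' ts + Phd (k th' ts) * k1t th' ts)
       + (Phd (k th' ts) * kt th' ts * U th' ts + U th' ts * (Phd (k th' ts) * kt th' ts))) - eps * 1).
      { apply (left_max (fun s => W th' s - eps * s) ts _ ts); [lra| |exact Dg]. intros h Hh. simpl.
        assert (HH := Hts2 (ts - h) ltac:(lra)).
        assert (W th' (ts - h) <= W (thm (ts - h)) (ts - h)) by (apply Red; unfold in_dom; lra).
        unfold th' at 2. lra. }
      rewrite Hkt0, Sch in H. nra. }

  intros th t d Ht Hd.
  assert (Htd : in_dom w t) by (unfold in_dom; lra).
  assert (Ed : d = U1 th t) by exact (uniqueness_limite _ _ _ _ Hd (F1 th t Htd)).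
  assert (HWb : W th t <= M0).
  { destruct (Rle_or_lt (W th t) M0) as [|Hc]; auto. exfalso.
    set (eps := (W th t - M0) / (2 * varpi)).
    assert (Heps : 0 < eps) by (unfold eps; apply Rdiv_lt_0_compat; lra).
    assert (K := Key eps Heps t Ht). assert (R1 := Red th t Htd).
    assert (eps * t <= eps * varpi) by (apply Rmult_le_compat_l; lra).
    assert (eps * varpi = (W th t - M0) / 2) by (unfold eps; field; lra). lra. }
  assert (M0 <= Rmax (2 * A) B) by (unfold M0, Rmax; repeat destruct Rle_dec; lra).
  rewrite Ed. unfold W in HWb. simpl. nra.
Qed.
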